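(* Let $F$ be a $3$-graph such that for every vertex $v\in V(F)$ there exists a vertex $u\in V(F)\setminus\{v\}$ with $N_F(v)\cap N_F(u)\neq\emptyset$. Then for every $p\in(0,1)$ and every $\mu>0$ there exist $n_0\in\mathbb{N}$ and $\alpha>0$ such that for every $n\ge n_0$ there exists an $(n,p,\mu,\cdot)$ $3$-graph $H$ with $\delta_1(H)\ge \alpha n^2$ that has no $F$-factor.
   Context: A $k$-graph $H=(V(H),E(H))$ has edge set $E(H)\subseteq\binom{V(H)}{k}$. For $S\subseteq V(H)$ with $1\le |S|\le k-1$, $N_H(S)=\{S'\in\binom{V(H)}{k-|S|}: S\cup S'\in E(H)\}$ and $\deg_H(S)=|N_H(S)|$; for a vertex $v$, $N_H(v)=N_H(\{v\})$ (so in a $3$-graph $N_H(v)$ is a set of pairs). $\delta_s(H)$ is the minimum of $\deg_H(S)$ over all $s$-subsets $S$ of $V(H)$. An $F$-factor in $H$ is a set of vertex-disjoint copies of $F$ in $H$ covering $V(H)$. An $(n,p,\mu,\cdot)$ $k$-graph is a $k$-graph $H$ on a vertex set $V$ with $|V|=n$ such that for all $X_1,\dots,X_k\subseteq V$, the number of $k$-tuples $(x_1,\dots,x_k)\in X_1\times\cdots\times X_k$ with $\{x_1,\dots,x_k\}\in E(H)$ is at least $p|X_1|\cdots|X_k|-\mu n^k$. *)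

(* Defs.v *)
From HB Require Import structures.
From mathcomp Require Import all_boot all_order all_algebra.
From mathcomp Require Import reals.
Set Implicit Arguments. Unset Strict Implicit. Unset Printing Implicit Defensive.
Import Order.TTheory GRing.Theory Num.Theory.
Local Open Scope ring_scope.

Definition uniform (V : finType) (k : nat) (E : {set {set V}}) : Prop :=
  forall e, e \in E -> #|e| = k :> nat.

Definition nbhd (V : finType) (k : nat) (E : {set {set V}}) (S : {set V})
  : {set {set V}} :=
  [set S' : {set V} | (#|S'| == k - #|S|)%N && ((S :|: S') \in E)].

Definition deg (V : finType) (k : nat) (E : {set {set V}}) (S : {set V}) : nat :=
  #|nbhd k E S|.

Definition min_deg_ge (R : realType) (V : finType) (k s : nat)
  (E : {set {set V}}) (x : R) : Prop :=
  forall S : {set V}, #|S| = s :> nat -> x <= (deg k E S)%:R.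

Definition edge_triples (V : finType) (E : {set {set V}}) (X1 X2 X3 : {set V})
  : nat :=
  #|[set t : V * V * V | [&& t.1.1 \in X1, t.1.2 \in X2, t.2 \in X3 &
                             [set t.1.1; t.1.2; t.2] \in E]]|.

Definition npmu3 (R : realType) (V : finType) (n : nat) (p mu : R)
  (E : {set {set V}}) : Prop :=
  #|V| = n :> nat /\
  forall X1 X2 X3 : {set V},
    p * (#|X1|%:R * #|X2|%:R * #|X3|%:R) - mu * (n%:R ^+ 3)
      <= (edge_triples E X1 X2 X3)%:R.

Definition is_copy (VF V : finType) (EF : {set {set VF}}) (E : {set {set V}})
  (f : {ffun VF -> V}) : Prop :=
  injective f /\ forall e, e \in EF -> f @: e \in E.

Definition has_factor (VF V : finType) (EF : {set {set VF}}) (E : {set {set V}})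
  : Prop :=
  exists C : {set {ffun VF -> V}},
    (forall f, f \in C -> is_copy EF E f) /\
    (forall f g, f \in C -> g \in C -> f != g ->
       [disjoint codom f & codom g]) /\
    (forall v : V, exists2 f, f \in C & v \in codom f).

(* Main.v *)
Require Import Defs.
From HB Require Import structures.
From mathcomp Require Import all_boot all_order all_algebra.
From mathcomp Require Import reals.
From mathcomp Require Import zify lra.
Import Order.TTheory GRing.Theory Num.Theory.
Set Implicit Arguments. Unset Strict Implicit.

Definition Eset (V : finType) (S : {set V}) (x : V) : {set {set V}} :=
  [set e : {set V} | (#|e| == 3)%N &&
     (if x \in e then e \subset S else (#|e :&: S| <= 1)%N)].

Lemma Eset_unif (V : finType) (S : {set V}) x : uniform 3 (Eset S x).
Proof. by move=> e; rewrite inE => /andP[/eqP]. Qed.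

Lemma no_factor (V VF : finType) (EF : {set {set VF}}) (S : {set V}) x :
  uniform 3 EF ->
  (forall v : VF, exists u : VF, u != v /\
     (nbhd 3 EF [set v] :&: nbhd 3 EF [set u] != set0)) ->
  ~ has_factor EF (Eset S x).
Proof.
move=> unF hF [C [Ccopy [_ Ccov]]].
have [f fC /codomP[w xw]] := Ccov x.
have [finj fE] := Ccopy f fC.
have [u [uw /set0Pn[T]]] := hF w.
rewrite !inE /= cards1 => /andP[/andP[T2 wT] /andP[_ uT]].
have wnT : w \notin T.
  apply/negP=> wT'; have := unF _ wT.
  by rewrite (setUidPr _) ?sub1set // (eqP T2).
have := fE _ wT; rewrite inE xw imsetU1 in_setU1 eqxx /= => /andP[_ sub].
have := fE _ uT; rewrite inE xw => /andP[_].
have -> : (f w \in f @: ([set u] :|: T)) = false.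
  apply/negP => /imsetP[y]; rewrite in_setU1 => /orP[/eqP->|yT] /finj e.
    by rewrite e eqxx in uw.
  by rewrite e yT in wnT.
have fTS : f @: T \subset S.
  apply: subset_trans sub; exact: subsetU1.
have : f @: T \subset f @: ([set u] :|: T) :&: S.
  rewrite subsetI fTS andbT; apply: imsetS; exact: subsetUr.
move=> /subset_leq_card; rewrite card_imset; last exact: finj.
by rewrite (eqP T2) => h1 h2; have := leq_trans h1 h2.
Qed.

Lemma deg_from (V : finType) (S : {set V}) x v (D : {set V}) :
  v \notin D ->
  (forall T : {set V}, T \subset D -> #|T| = 2 ->
     if x \in v |: T then v |: T \subset S else (#|(v |: T) :&: S| <= 1)%N) ->
  ('C(#|D|, 2) <= deg 3 (Eset S x) [set v])%N.
Proof.
move=> vD hD; rewrite -cards_draws /deg; apply: subset_leq_card.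
apply/subsetP => T; rewrite !inE cards1 => /andP[TD /eqP T2].
have vT : v \notin T by apply/negP => /(subsetP TD); rewrite (negbTE vD).
rewrite T2 eqxx /= cardsU1 vT T2 eqxx /=.
by have := hD T TD T2; rewrite in_setU1.
Qed.

Lemma outside (V : finType) (S : {set V}) x v (T : {set V}) :
  x \in S -> x != v -> T \subset ~: S ->
  if x \in v |: T then v |: T \subset S else (#|(v |: T) :&: S| <= 1)%N.
Proof.
move=> xS xv TS.
have xT : x \notin T by apply/negP => /(subsetP TS); rewrite inE xS.
rewrite in_setU1 (negbTE xv) (negbTE xT) /=.
rewrite -(cards1 v); apply: subset_leq_card; apply/subsetP => y.
rewrite !inE => /andP[/orP[//|yT] yS].
by have := subsetP TS y yT; rewrite inE yS.
Qed.

Lemma deg_lb (V : finType) (S : {set V}) x v : x \in S ->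
  ('C(minn (#|S|).-1 (#|~: S|).-1, 2) <= deg 3 (Eset S x) [set v])%N.
Proof.
move=> xS.
have [vx|xv] := eqVneq x v.
  subst v; apply: leq_trans (deg_from (D := S :\ x) _ _).
  - apply: leq_bin2l; rewrite (cardsD1 x S) xS /=; exact: geq_minl.
  - by rewrite !inE eqxx.
  move=> T TD _; rewrite setU11.
  apply/subsetP => y; rewrite in_setU1 => /orP[/eqP->//|/(subsetP TD)].
  by rewrite inE => /andP[].
have [vS|vS] := boolP (v \in S).
  apply: leq_trans (deg_from (D := ~: S) _ _).
  - apply: leq_bin2l; exact: leq_trans (geq_minr _ _) (leq_pred _).
  - by rewrite inE vS.
  by move=> T TD _; apply: outside.
apply: leq_trans (deg_from (D := ~: S :\ v) _ _).
- apply: leq_bin2l; rewrite (cardsD1 v (~: S)) inE vS /=; exact: geq_minr.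
- by rewrite !inE eqxx.
move=> T TD _; apply: outside => //; apply: subset_trans TD _; exact: subsetDl.
Qed.

Lemma cardU_le (T : finType) (A B : {set T}) : (#|A :|: B| <= #|A| + #|B|)%N.
Proof. exact: (leq_card_setU A B).1. Qed.

Lemma diag_card (V : finType) (f : V * V -> V * V * V) (P : pred (V * V * V)) :
  (forall t, P t -> exists p, t = f p) -> (#|[set t | P t]| <= #|V| * #|V|)%N.
Proof.
move=> h; rewrite -card_prod -cardsT.
apply: leq_trans (leq_imset_card f _); apply: subset_leq_card.
apply/subsetP => t; rewrite inE => /h[p ->]; exact: imset_f.
Qed.

Lemma triples_bound (V : finType) (S : {set V}) x (X1 X2 X3 : {set V}) :
  x \in S ->
  (#|X1| * #|X2| * #|X3| <= edge_triples (Eset S x) X1 X2 X3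
                            + (3 * #|S| * (#|V| * #|V|) + 3 * (#|V| * #|V|)))%N.
Proof.
move=> xS.
pose E := Eset S x.
pose Bad := [set t : V * V * V | [set t.1.1; t.1.2; t.2] \notin E].
pose U1 := setX (setX S [set: V]) [set: V].
pose U2 := setX (setX [set: V] S) [set: V].
pose U3 := setX (setX [set: V] [set: V]) S.
pose D12 := [set t : V * V * V | t.1.1 == t.1.2].
pose D13 := [set t : V * V * V | t.1.1 == t.2].
pose D23 := [set t : V * V * V | t.1.2 == t.2].
have hB : Bad \subset U1 :|: U2 :|: U3 :|: D12 :|: D13 :|: D23.
  apply/subsetP => [[[a b] c]]; rewrite !inE /=.
  apply: contraR; rewrite !negb_or => /andP[/andP[/andP[/andP[/andP[aS bS] cS] ab] ac] bc].
  rewrite !andbT in aS bS.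
  rewrite -setUA cardsU1 cards2 !inE (negbTE ab) (negbTE ac) bc /=.
  have xa : (x == a) = false by apply/negP => /eqP ea; rewrite -ea xS in aS.
  have xb : (x == b) = false by apply/negP => /eqP ea; rewrite -ea xS in bS.
  have xc : (x == c) = false by apply/negP => /eqP ea; rewrite -ea xS in cS.
  rewrite xa xb xc /=.
  have -> : (a |: [set b; c]) :&: S = set0.
    apply/setP => y; rewrite !inE; apply/negP => /andP[h yS]; move: h.
    by move=> /or3P[] /eqP e; subst y; rewrite yS in aS bS cS.
  by rewrite cards0.
have hP : setX (setX X1 X2) X3 \subset
    [set t : V * V * V | [&& t.1.1 \in X1, t.1.2 \in X2, t.2 \in X3 &
                             [set t.1.1; t.1.2; t.2] \in E]] :|: Bad.
  apply/subsetP => [[[a b] c]]; rewrite !inE /= => /andP[/andP[-> ->] ->] /=.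
  by rewrite orbN.
have := subset_leq_card hP; rewrite !cardsX => h1.
apply: leq_trans h1 _; rewrite /edge_triples.
apply: leq_trans (cardU_le _ _) _; rewrite leq_add2l.
apply: leq_trans (subset_leq_card hB) _.
have cU : forall A B : {set V * V * V}, (#|A :|: B| <= #|A| + #|B|)%N by move=> A B; exact: cardU_le.
apply: leq_trans (cU _ _) _.
apply: leq_trans (leq_add (cU _ _) (leqnn _)) _.
apply: leq_trans (leq_add (leq_add (cU _ _) (leqnn _)) (leqnn _)) _.
apply: leq_trans (leq_add (leq_add (leq_add (cU _ _) (leqnn _)) (leqnn _)) (leqnn _)) _.
apply: leq_trans (leq_add (leq_add (leq_add (leq_add (cU _ _) (leqnn _)) (leqnn _)) (leqnn _)) (leqnn _)) _.
rewrite !cardsX !cardsT.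
have d12 : (#|D12| <= #|V| * #|V|)%N.
  by apply: (diag_card (f := fun p => (p.1, p.1, p.2))) => [[[a b] c]] /= /eqP <-; exists (a, c).
have d13 : (#|D13| <= #|V| * #|V|)%N.
  by apply: (diag_card (f := fun p => (p.1, p.2, p.1))) => [[[a b] c]] /= /eqP <-; exists (a, b).
have d23 : (#|D23| <= #|V| * #|V|)%N.
  by apply: (diag_card (f := fun p => (p.1, p.2, p.2))) => [[[a b] c]] /= /eqP <-; exists (a, b).
set s := #|S|; set N := #|V|; move: d12 d13 d23; set q := #|D12|; set r := #|D13|; set w := #|D23|.
move=> *; nia.
Qed.

Lemma bin2_twice m : 2 * 'C(m, 2) = m * m.-1.
Proof.
elim: m => [//|m IH]; rewrite binS bin1 mulnDr IH /=; case: m {IH} => [//|m] /=; nia.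
Qed.

Lemma deg_nat K n m c : 4 <= K -> 4 * K <= n -> m * K <= n -> n < m.+1 * K ->
  m <= c -> n * n <= 8 * K * K * 'C(c, 2).
Proof.
move=> K4 nK mK nm mc.
have h1 := leq_bin2l 2 mc.
have h2 := bin2_twice m.
have h3 : 3 <= m by nia.
nia.
Qed.

Lemma bad_nat K n m : 4 <= K -> 4 * K <= n -> m * K <= n ->
  (3 * m.+1 * (n * n) + 3 * (n * n)) * K <= 6 * n ^ 3.
Proof. move=> *; nia. Qed.
Unset Implicit Arguments.
Local Open Scope ring_scope.

Theorem mainTheorem1 (R : realType) (VF : finType) (EF : {set {set VF}}) :
  uniform 3 EF ->
  (forall v : VF, exists u : VF, u != v /\
     (nbhd 3 EF [set v] :&: nbhd 3 EF [set u] != set0)) ->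
  forall p mu : R, 0 < p -> p < 1 -> 0 < mu ->
  exists (n0 : nat) (alpha : R), 0 < alpha /\
    forall n : nat, (n0 <= n)%N ->
      exists E : {set {set 'I_n}},
        [/\ uniform 3 E, npmu3 n p mu E,
            min_deg_ge 3 1 E (alpha * n%:R ^+ 2) & ~ has_factor EF E].
Proof.
move=> unF hF p mu p0 p1 mu0.
pose K := (Num.bound (6 / mu) + 4)%N.
have K4 : (4 <= K)%N by rewrite /K leq_addl.
have K0 : (0 < K)%N by apply: leq_trans K4.
have muK : 6 <= mu * K%:R.
  have h := archi_boundP (ltW (divr_gt0 (ltr0n _ 6) mu0) : 0 <= 6 / mu).
  have : 6 / mu < K%:R.
    apply: lt_le_trans h _; rewrite ler_nat /K leq_addr //.
  rewrite ltr_pdivrMr // => h2; rewrite mulrC; exact: ltW.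
exists (4 * K)%N, (8 * K * K)%:R^-1; split.
  by rewrite invr_gt0 ltr0n !muln_gt0 K0.
move=> n nK.
have mlt : ((n %/ K).+1 <= n)%N.
  rewrite ltn_divLR //; nia.
set m := (n %/ K)%N.
have mK : (m * K <= n)%N by apply: leq_divM.
have nm : (n < m.+1 * K)%N by apply: ltn_ceil.
pose w := @widen_ord _ _ mlt.
have winj : injective w by move=> a b /(congr1 val) /= ab; apply: val_inj.
pose S := [set w i | i : 'I_m.+1].
pose x := w ord0.
have xS : x \in S by apply: imset_f.
have cS : #|S| = m.+1 by rewrite card_imset // card_ord.
exists (Eset S x); split.
- exact: Eset_unif.
- split; first by rewrite card_ord.
  move=> X1 X2 X3.
  have h := triples_bound X1 X2 X3 xS.
  rewrite cS card_ord in h.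
  have hb := bad_nat K4 nK mK.
  set bad := (3 * m.+1 * (n * n) + 3 * (n * n))%N in h hb.
  set et := edge_triples _ _ _ _ in h *.
  have hbR : bad%:R <= mu * n%:R ^+ 3.
    have : bad%:R * K%:R <= mu * n%:R ^+ 3 * K%:R :> R.
      rewrite -natrM (le_trans (_ : _ <= (6 * n ^ 3)%N%:R)) ?ler_nat //.
      rewrite natrM natrX.
      have N0 : 0 <= n%:R ^+ 3 :> R by rewrite exprn_ge0.
      set N := n%:R ^+ 3 in N0 *; nra.
    by rewrite ler_pM2r // ltr0n.
  have hR : (#|X1| * #|X2| * #|X3|)%N%:R <= et%:R + bad%:R :> R.
    by rewrite -natrD ler_nat.
  rewrite !natrM in hR.
  set P := _ * _ * _ in hR *.
  have P0 : 0 <= P by rewrite !mulr_ge0.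
  have pP : p * P <= P by rewrite ler_piMl // ltW.
  lra.
- move=> S0 /eqP/cards1P[v ->].
  have h := deg_lb v xS.
  have hc : (m <= minn (#|S|).-1 (#|~: S|).-1)%N.
    have := cardsC S; rewrite cS card_ord => hC.
    have m4 : (m * 4 <= n)%N by apply: leq_trans mK; rewrite leq_mul2l K4 orbT.
    have m1 : (4 <= m)%N by rewrite leq_divRL //.
    rewrite leq_min /=; apply/andP; split => //.
    move: hC m4 m1; move: (#|~: S|) => c; clear; move: m => m0 *; lia.
  have hn := deg_nat K4 nK mK nm hc.
  rewrite ler_pdivrMl ?ltr0n ?muln_gt0 ?K0 //.
  rewrite -natrX -natrM ler_nat -mulnn.
  exact: leq_trans hn (leq_mul (leqnn _) h).
- exact: no_factor.
Qed.
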